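(* Let $p>5$ be a prime with $p\equiv \pm1\pmod 5$. Let $f(x)=x^5-5x^3+5x+2-4t\in\mathbb F_p[t][x]$, write $f(x)^{(p-1)/2}=\sum_r c_r x^r$ with $c_r\in\mathbb F_p[t]$, and let $a(t)=c_{p-1}$, $b(t)=c_{2p-2}$ be the diagonal entries of $N=\begin{pmatrix}c_{p-1}&c_{p-2}\\c_{2p-1}&c_{2p-2}\end{pmatrix}$ (the $p$-th power of the Cartier–Manin matrix of $C^-:y^2=f(x)$ with respect to the basis $dx/y,\ x\,dx/y$, which is diagonal for such $p$). Then, as polynomials in $t$ over $\mathbb F_p$, $$\deg a(t)=\begin{cases}\tfrac32 k,& p=5k+1,\\ \tfrac32 k-1,& p=5k-1,\end{cases}\qquad \deg b(t)=\begin{cases}\tfrac12 k,& p=5k+1,\\ \tfrac12 k-1,& p=5k-1.\end{cases}$$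
   Context: For a hyperelliptic curve $y^2=f(x)$ of genus $g$ over a field of characteristic $p>2$, the Cartier–Manin matrix with respect to the basis $x^{j-1}dx/y$ ($j=1,\dots,g$) of $H^0(C,\Omega^1_C)$ is $N^{(1/p)}$, where $N=(c_{ip-j})_{i,j}$ and $f(x)^{(p-1)/2}=\sum c_r x^r$. *)

(* Defs.v *)
From mathcomp Require Import all_boot all_order all_algebra.
Set Implicit Arguments. Unset Strict Implicit. Unset Printing Implicit Defensive.
Import GRing.Theory.
Local Open Scope ring_scope.

(* The curve polynomial f(x) = x^5 - 5x^3 + 5x + 2 - 4t in F_p[t][x]:
   outer polynomial variable is x, inner (coefficient) variable is t. *)
Definition fpoly (p : nat) : {poly {poly 'F_p}} :=
  'X^5 - 5%:R *: 'X^3 + 5%:R *: 'X + ((2%:R - 4%:R *: 'X : {poly 'F_p})%:P).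

Definition cm_coef (p r : nat) : {poly 'F_p} :=
  ((fpoly p) ^+ (p.-1)./2)`_r.

Definition cmN (p : nat) : 'M[{poly 'F_p}]_2 :=
  \matrix_(i < 2, j < 2) cm_coef p (i.+1 * p - j.+1)%N.

(* Main.v *)
Require Import Defs.
From mathcomp Require Import all_boot all_order all_algebra.
From mathcomp Require Import zify ring lra.
Import GRing.Theory.
Local Open Scope ring_scope.

Section G.
Variable p : nat.
Local Notation F := ('F_p).

Definition G0 : {poly F} := 'X^5 - 5%:R *: 'X^3 + 5%:R *: 'X + (2%:R)%:P.
Definition e m r := (G0 ^+ m)`_r.

Lemma G0_coef i : G0`_i = (i == 5)%:R - 5%:R * (i == 3)%:R + 5%:R * (i == 1)%:R + 2%:R * (i == 0)%:R.
Proof. by rewrite /G0 !coefE; case: i => [|[|[|[|[|[|i]]]]]] /=; ring. Qed.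

Lemma size_G0 : (size G0 <= 6)%N.
Proof.
apply/leq_sizeP => j hj; rewrite G0_coef.
have -> : (j == 5)%N = false by apply/eqP; lia.
have -> : (j == 3)%N = false by apply/eqP; lia.
have -> : (j == 1)%N = false by apply/eqP; lia.
have -> : (j == 0)%N = false by apply/eqP; lia.
by rewrite !mulr0 subr0 !addr0.
Qed.

Lemma e_big m r : (5 * m < r)%N -> e m r = 0.
Proof.
move=> h; rewrite /e; apply/leq_sizeP; last exact: leqnn.
apply: leq_trans (size_poly_exp_leq _ _) _.
have := size_G0; move: (size G0) => s hs.
have : ((s.-1 * m) <= 5 * m)%N by apply: leq_mul => //; lia.
lia.
Qed.

Lemma e_rec m r : e m.+1 (r + 5) = e m r - 5%:R * e m (r + 2) + 5%:R * e m (r + 4) + 2%:R * e m (r + 5).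
Proof.
rewrite /e exprSr {2}/G0 !mulrDr mulrN -!scalerAr !coefD coefN !coefZ coefMC coefMXn.
rewrite -['X]expr1 !coefMXn /=.
have -> : (r + 5 < 5)%N = false by lia.
have -> : (r + 5 < 3)%N = false by lia.
have -> : (r + 5 < 1)%N = false by lia.
have -> : (r + 5 - 5 = r)%N by lia.
have -> : (r + 5 - 3 = r + 2)%N by lia.
have -> : (r + 5 - 1 = r + 4)%N by lia.
ring.
Qed.

Lemma e_top m : e m (5 * m) = 1.
Proof.
elim: m => [|m IH]; first by rewrite /e expr0 coefC.
have -> : (5 * m.+1 = 5 * m + 5)%N by lia.
rewrite e_rec IH !e_big; try lia. by rewrite !mulr0 subr0 !addr0.
Qed.

Lemma e_A m : e m.+1 (5 * m + 3) = - (5 * m.+1)%:R.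
Proof.
elim: m => [|m IH]; first by rewrite /e expr1 G0_coef /=; ring.
have -> : (5 * m.+1 + 3 = (5 * m + 3) + 5)%N by lia.
rewrite e_rec IH.
have -> : (5 * m + 3 + 2 = 5 * m.+1)%N by lia.
rewrite e_top !e_big; try lia. rewrite !natrM !mulrSr. ring.
Qed.

Lemma e_B m : e m.+1 (5 * m + 1) = (5 * m.+1 + 25 * 'C(m.+1, 2))%:R.
Proof.
elim: m => [|m IH]; first by rewrite /e expr1 G0_coef /= bin_small // muln0 addn0; ring.
have -> : (5 * m.+1 + 1 = (5 * m + 1) + 5)%N by lia.
rewrite e_rec IH.
have -> : (5 * m + 1 + 2 = 5 * m + 3)%N by lia.
have -> : (5 * m + 1 + 4 = 5 * m.+1)%N by lia.
rewrite e_A e_top e_big; last lia.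
rewrite (binS m.+1 1) bin1 !natrD !natrM !mulrSr. ring.
Qed.
End G.
Lemma fpoly_eq p : fpoly p = map_poly polyC (G0 p) + ((- 4%:R) *: 'X : {poly 'F_p})%:P.
Proof.
apply/polyP => i; rewrite /fpoly [RHS]coefD coef_map /= G0_coef !coefE.
case: i => [|[|[|[|[|[|i]]]]]] /=; rewrite ?polyCD ?polyCN ?polyCM; try ring.
rewrite !mulr0 polyC1 mulr1 scaleNr polyC0 (_ : (2%:R : ('F_p))%:P = 2%:R) ?rmorph_nat //; ring.
Qed.

Lemma cm_coefE p r j : (cm_coef p r)`_j =
  if (j <= (p.-1)./2)%N then (e p ((p.-1)./2 - j) r * (- 4%:R) ^+ j) *+ 'C((p.-1)./2, j) else 0.
Proof.
rewrite /cm_coef fpoly_eq; set n := (p.-1)./2.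
rewrite exprDn coef_sum.
under eq_bigr => i _ do rewrite coefMn -polyC_exp coefMC -[_ ^:P ^+ _]rmorphXn coef_map /=.
rewrite coef_sum.
under eq_bigr => i _ do rewrite coefMn coefCM exprZn coefZ coefXn.
case: ifP => hj.
  rewrite (bigD1 (Ordinal (n := n.+1) (m := j) hj)) //= big1 ?addr0 ?eqxx ?mulr1 //.
  move=> i /eqP hi; rewrite [(j == i)%N]eq_sym.
  have -> : (i == j :> nat) = false by apply/eqP => h; apply: hi; apply: val_inj.
  by rewrite mulr0 mulr0 mul0rn.
rewrite big1 // => i _.
have -> : (j == i :> nat) = false by apply/eqP => h; move: (ltn_ord i); lia.
by rewrite mulr0 mulr0 mul0rn.
Qed.

Lemma ndvd_fact p n : prime p -> (n < p)%N -> ~~ (p %| n`!)%N.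
Proof.
move=> pp; elim: n => [|n IH] h; first by rewrite fact0 dvdn1; apply/eqP => e1; move: pp; rewrite e1.
rewrite factS Euclid_dvdM // negb_or IH ?andbT; last lia.
by apply/negP => /dvdn_leq; lia.
Qed.

Lemma size_cm p r d m0 : prime p -> (5 < p)%N -> (d + m0 = (p.-1)./2)%N ->
  (5 * m0 < r + 5)%N -> e p m0 r != 0 -> size (cm_coef p r) = d.+1.
Proof.
move=> pp p5 hd hr he; apply/eqP; rewrite eqn_leq; apply/andP; split.
  apply/leq_sizeP => j hj; rewrite cm_coefE; case: ifP => // hjn.
  by rewrite e_big ?mul0r ?mul0rn //; lia.
rewrite ltnNge; apply/negP => /leq_sizeP /(_ d (leqnn d)); apply/eqP.
rewrite cm_coefE.
have -> : (d <= (p.-1)./2)%N by lia.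
have -> : ((p.-1)./2 - d = m0)%N by lia.
rewrite -mulr_natr mulf_neq0 // ?mulf_neq0 // ?expf_neq0 // ?oppr_eq0.
  by rewrite -(dvdn_pcharf (pchar_Fp pp)); apply/negP => /dvdn_leq; lia.
rewrite -(dvdn_pcharf (pchar_Fp pp)); apply/negP => hdv.
have hf : (p %| ((p.-1)./2)`!)%N.
  rewrite -(bin_fact (m := d)); last lia.
  exact: dvdn_mulr.
have hl : ((p.-1)./2 < p)%N by rewrite -divn2; apply: leq_ltn_trans (leq_div _ _) _; lia.
by move: (ndvd_fact _ _ pp hl); rewrite hf.
Qed.

Local Close Scope ring_scope.
Lemma half2 x : ((2 * x)./2 = x)%N.
Proof. by rewrite mul2n doubleK. Qed.

Theorem lemma4p5 (p : nat) :
  prime p -> (5 < p)%N -> (p %% 5 = 1 \/ p %% 5 = 4)%N ->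
  forall k : nat,
    ((p = 5 * k + 1)%N ->
       size (cmN p ord0 ord0) = ((3 * k)./2).+1 /\
       size (cmN p ord_max ord_max) = (k./2).+1) /\
    ((p = 5 * k - 1)%N ->
       size (cmN p ord0 ord0) = ((3 * k)./2 - 1).+1 /\
       size (cmN p ord_max ord_max) = (k./2 - 1).+1).
Proof.
move=> pp p5 _ k; rewrite !mxE /=.
have podd : odd p by case: (boolP (odd p)) => // /(prime_oddPn pp) h; lia.
split=> hp.
  have kev : ~~ odd k by move: podd; rewrite hp oddD oddM /=; case: (odd k).
  have hk : k = (2 * k./2)%N by rewrite -[LHS]odd_double_half (negbTE kev) add0n mul2n.
  move: hp; rewrite hk !half2 (mulnCA 3 2) half2; set h := k./2 => hp.
  have hn : ((p.-1)./2 = 5 * h)%N by rewrite hp (_ : (5 * (2 * h) + 1).-1 = 2 * (5 * h))%N ?half2 //; lia.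
  split.
    apply: (size_cm _ _ _ (2 * h)) => //; try lia.
    by rewrite (_ : (1 * p - 1 = 5 * (2 * h))%N) ?e_top ?oner_eq0 //; lia.
  apply: (size_cm _ _ _ (4 * h)) => //; try lia.
  by rewrite (_ : (2 * p - 2 = 5 * (4 * h))%N) ?e_top ?oner_eq0 //; lia.
have kev : ~~ odd k.
  move: podd; rewrite hp; case: k {hp} => [|k'] //.
  by rewrite (_ : (5 * k'.+1 - 1 = 4 + 5 * k')%N) ?oddD ?oddM /=; [case: (odd k')|lia].
have hk : k = (2 * k./2)%N by rewrite -[LHS]odd_double_half (negbTE kev) add0n mul2n.
move: hp; rewrite hk !half2 (mulnCA 3 2) half2; set h := k./2 => hp.
have h1 : (1 <= h)%N by lia.
have hn : ((p.-1)./2 = 5 * h - 1)%N by rewrite hp (_ : (5 * (2 * h) - 1).-1 = 2 * (5 * h - 1))%N ?half2 //; lia.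
split.
  apply: (size_cm _ _ _ (2 * h)) => //; try lia.
  rewrite (_ : e p (2 * h) (1 * p - 1) = e p (2 * h - 1).+1 (5 * (2 * h - 1) + 3)); last by congr e; lia.
  rewrite e_A (_ : (5 * (2 * h - 1).+1 = p + 1)%N); last lia.
  by rewrite natrD (pchar_Fp_0 pp) add0r oppr_eq0 oner_eq0.
apply: (size_cm _ _ _ (4 * h)) => //; try lia.
rewrite (_ : e p (4 * h) (2 * p - 2) = e p (4 * h - 1).+1 (5 * (4 * h - 1) + 1)); last by congr e; lia.
rewrite e_B.
set x := (_ + _)%N.
have hx : (x + 1 = p * (2 * p + 1))%N.
  rewrite /x bin2 (_ : ((4 * h - 1).+1 * (4 * h - 1).+1.-1 = 2 * (2 * h * (4 * h - 1)))%N); last nia.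
  rewrite half2 hp; nia.
have : ((x%:R : 'F_p) + 1 = 0)%R by rewrite -(natrD _ x 1) hx natrM (pchar_Fp_0 pp) mul0r.
move/eqP; rewrite addr_eq0 => /eqP ->; by rewrite oppr_eq0 oner_eq0.
Qed.
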